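(* Let $G$ be a finite connected bipartite $\mathcal{C}$-$\mathrm{HH}$ graph with bipartition $(X,Y)$. (i) If the $6$-cycle $C_6$ or the two-squares graph embeds in $G$, then $\mathrm{diam}(G)=3$. (ii) If $\mathrm{diam}(G)=3$, then for each $k\le\Delta(G)$ every $k$-element subset of $X$ and every $k$-element subset of $Y$ has a common neighbour.
   Context: Subgraphs are induced; ''embeds'' means is isomorphic to an induced subgraph. A homomorphism maps edges to edges. A graph $G$ is $\mathcal{C}$-$\mathrm{HH}$ if every homomorphism from a finite connected induced subgraph of $G$ into $G$ extends to a homomorphism $G\to G$. The two-squares graph is the $6$-cycle $v_1\dots v_6v_1$ with the single chord $v_3v_6$. $\mathrm{diam}(G)$ is the diameter and $\Delta(G)$ the maximum degree. A common neighbour of a vertex set $S$ is a vertex adjacent to every vertex of $S$. *)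

(* Defs.v *)
From mathcomp Require Import all_boot.
Set Implicit Arguments. Unset Strict Implicit. Unset Printing Implicit Defensive.

Section Graphs.
Variable T : finType.
Variable e : rel T.

Definition simple_graph : Prop := symmetric e /\ irreflexive e.

Definition connected_graph : Prop := 0 < #|T| /\ forall x y : T, connect e x y.

Definition induced_rel (S : {set T}) : rel T :=
  fun x y => [&& x \in S, y \in S & e x y].

Definition induced_connected (S : {set T}) : Prop :=
  S != set0 /\ {in S &, forall x y, connect (induced_rel S) x y}.

(* a homomorphism from the induced subgraph G[S] into G, represented by a map
   T -> T of which only the values on S matter *)
Definition hom_from_induced (S : {set T}) (f : T -> T) : Prop :=
  {in S &, forall x y, e x y -> e (f x) (f y)}.

Definition graph_endo (g : T -> T) : Prop := forall x y, e x y -> e (g x) (g y).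

Definition CHH : Prop :=
  forall (S : {set T}) (f : T -> T),
    induced_connected S -> hom_from_induced S f ->
    exists g : T -> T, graph_endo g /\ {in S, forall x, g x = f x}.

Definition bipartition (X Y : {set T}) : Prop :=
  [/\ X :&: Y = set0, X :|: Y = setT & forall x y, e x y -> (x \in X) = (y \in Y)].

Definition walk_len (n : nat) (x y : T) : Prop :=
  exists p : seq T, [/\ size p = n, path e x p & last x p = y].

Definition dist_eq (x y : T) (d : nat) : Prop :=
  walk_len d x y /\ forall n, n < d -> ~ walk_len n x y.

Definition diam_eq (d : nat) : Prop :=
  (forall x y, exists2 n, n <= d & walk_len n x y) /\
  (exists x y, dist_eq x y d).

Definition degree (x : T) : nat := #|[set y | e x y]|.

Definition maxdeg : nat := \max_(x : T) degree x.

Definition common_neighbour (A : {set T}) (v : T) : Prop := forall a, a \in A -> e a v.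

Definition embeds (n : nat) (H : rel 'I_n) : Prop :=
  exists f : 'I_n -> T, injective f /\ forall i j, e (f i) (f j) = H i j.

End Graphs.

(* the 6-cycle on vertices 0..5 (v_{i+1} = i) *)
Definition C6_rel : rel 'I_6 :=
  fun i j => (j == (i.+1 %% 6) :> nat) || (i == (j.+1 %% 6) :> nat).

(* the two-squares graph: C6 v1..v6 with the chord v3v6, i.e. vertices 2 and 5 *)
Definition two_squares_rel : rel 'I_6 :=
  fun i j => C6_rel i j || ((i == 2 :> nat) && (j == 5 :> nat))
                        || ((i == 5 :> nat) && (j == 2 :> nat)).

(* Main.v *)
Require Import Defs.
From mathcomp Require Import all_boot zify.
Set Implicit Arguments. Unset Strict Implicit. Unset Printing Implicit Defensive.

Lemma third (T : finType) (A : {set T}) a b :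
  2 < #|A| -> exists2 j, j \in A & (j != a) && (j != b).
Proof.
move=> h; have h1 := cardsD1 a A; have h2 := cardsD1 b (A :\ a).
have : 0 < #|A :\ a :\ b| by lia.
by case/card_gt0P => j; rewrite !inE => /and3P[jb ja jA]; exists j; rewrite ?jb ?ja.
Qed.

Lemma core (T : finType) (e : rel T) (s : T -> bool) (A : {set T}) (v : T -> T) :
  symmetric e -> CHH e ->
  (forall x y, e x y -> s x != s y) ->
  (forall x y, x != y -> s x = s y -> exists w, e x w /\ e w y) ->
  {in A, forall a, s a} -> 2 < #|A| ->
  {in A &, forall a b, e b (v a) = (b != a)} ->
  ~ (exists c, common_neighbour e A c) ->
  (forall B : {set T}, B \proper A -> exists c, common_neighbour e B c) ->
  forall m z, m \in A -> e z (v m) -> z \in A.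
Proof.
move=> esym hchh hbip hcn hsA hA3 hv hnoc hprop m z mA ezv.
case: (boolP (z \in A)) => // zA; exfalso; apply: (hnoc).
have sv : forall j, j \in A -> s (v j) = false.
  move=> j jA; have [b bA /andP[bj _]] := third j j hA3.
  have := hbip _ _ (etrans (hv j b jA bA) bj) .
  by rewrite hsA //; case: (s (v j)).
have sz : s z by have := hbip _ _ ezv; rewrite sv //; case: (s z).
have zm : z != m by apply: contraNneq zA => ->.
have [y [ezy eym]] : exists w, e z w /\ e w m by apply: hcn => //; rewrite sz hsA.
have sy : s y = false by have := hbip _ _ ezy; rewrite sz; case: (s y).
pose B := [set b in A | e y b].
have [c hc] : exists c, common_neighbour e B c.
  apply: hprop; rewrite properEneq; apply/andP; split; last first.
    by apply/subsetP => b; rewrite inE => /andP[].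
  apply/negP => /eqP BA; apply: hnoc; exists y => a aA.
  by move: aA; rewrite -BA inE esym => /andP[].
pose V' := [set v j | j in A :\ m].
pose S := A :|: V' :|: [set z; y].
pose f := fun x => if x \in A then x else if x == z then m else if x \in V' then x else c.
have V'P : forall x, x \in V' -> exists2 j, j \in A & (j != m) /\ x = v j.
  by move=> x /imsetP[j]; rewrite !inE => /andP[jm jA] ->; exists j.
have sV' : forall x, x \in V' -> s x = false.
  by move=> x /V'P[j jA [_ ->]]; rewrite sv.
have hom1 : forall x x', x \in S -> x' \in S -> e x x' -> s x -> e (f x) (f x').
  move=> x x' xS x'S exx' sx.
  have sx' : s x' = false by have := hbip _ _ exx'; rewrite sx; case: (s x').
  have x'A : x' \notin A by apply/negP => /hsA; rewrite sx'.
  have x'z : x' != z by apply/eqP => xz; move: sx'; rewrite xz sz.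
  have xAz : (x \in A) || (x == z).
    move: xS; rewrite /S !inE; case/orP=> [/orP[->//|/sV']|/orP[->|/eqP xy]]; rewrite ?orbT //.
      by rewrite sx.
    by move: sx; rewrite xy sy.
  have x'Vy : (x' \in V') || (x' == y).
    move: x'S; rewrite /S !inE; case/orP=> [/orP[xA|->//]|/orP[/eqP xz|->]]; rewrite ?orbT //.
      by move: x'A; rewrite xA.
    by move: x'z; rewrite xz eqxx.
  case x'V : (x' \in V').
    have -> : f x' = x' by rewrite /f (negbTE x'A) (negbTE x'z) x'V.
    case xA : (x \in A); first by rewrite /f xA.
    move: xAz; rewrite xA /= => /eqP xz; subst x.
    rewrite /f (negbTE zA) eqxx.
    by case/V'P: x'V => j jA [jm ->]; rewrite hv // eq_sym.
  move: x'Vy; rewrite x'V /= => /eqP x'y; subst x'.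
  have -> : f y = c by rewrite /f (negbTE x'A) (negbTE x'z) x'V.
  apply: hc; case xA : (x \in A).
    by rewrite /f xA inE xA esym.
  move: xAz; rewrite xA /= => /eqP xz; subst x.
  by rewrite /f (negbTE zA) eqxx inE mA.
have hom : hom_from_induced e S f.
  move=> x x' xS x'S exx'; case sx: (s x); first exact: hom1.
  have sx' : s x' by have := hbip _ _ exx'; rewrite sx; case: (s x').
  by rewrite esym; apply: hom1 => //; rewrite esym.
pose R := induced_rel e S.
have Rsym : symmetric R by move=> a b; rewrite /R /induced_rel andbCA esym.
have mS : m \in S by rewrite /S !inE mA.
have vS : forall j, j \in A -> j != m -> v j \in S.
  by move=> j jA jm; rewrite /S !inE; apply/orP; left; apply/orP; right; apply/imsetP; exists j; rewrite // !inE jm.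
have zS : z \in S by rewrite /S !inE eqxx !orbT.
have yS : y \in S by rewrite /S !inE eqxx !orbT.
have Rvm : forall j, j \in A -> j != m -> R (v j) m.
  move=> j jA jm; rewrite /R /induced_rel vS // mS /= esym hv //.
  by rewrite eq_sym.
have toM : forall x, x \in S -> connect R x m.
  move=> x; rewrite /S !inE; case/orP=> [/orP[xA|/V'P[j jA [jm ->]]]|/orP[/eqP->|/eqP->]].
  - case: (eqVneq x m) => [->|xm]; first exact: connect0.
    have [j jA /andP[jx jm]] := third x m hA3.
    apply: (connect_trans (y:=v j)); apply: connect1; last exact: Rvm.
    have xS : x \in S by rewrite /S !inE xA.
    by rewrite /R /induced_rel vS // xS /= hv // eq_sym.
  - by apply: connect1; apply: Rvm.
  - apply: (connect_trans (y:=y)); apply: connect1.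
      by rewrite /R /induced_rel zS yS.
    by rewrite /R /induced_rel yS mS.
  - by apply: connect1; rewrite /R /induced_rel yS mS.
have hconn : induced_connected e S.
  split; first by apply/set0Pn; exists m.
  move=> x x' xS x'S; apply: (connect_trans (toM x xS)).
  by rewrite (sym_connect_sym Rsym); apply: toM.
have [g [gendo gf]] := hchh S f hconn hom.
exists (g (v m)) => a aA.
case: (eqVneq a m) => [->|am].
  by have := gendo _ _ ezv; rewrite gf // /f (negbTE zA) eqxx.
have := gendo _ _ (etrans (hv m a mA aA) am); rewrite gf; first by rewrite /f aA.
by rewrite /S !inE aA.
Qed.

Lemma walk0 (T : finType) (e : rel T) x y : walk_len e 0 x y -> x = y.
Proof. by case=> [[|w p]] []. Qed.

Lemma walkS (T : finType) (e : rel T) n x y :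
  walk_len e n.+1 x y -> exists2 w, e x w & walk_len e n w y.
Proof.
case=> [[|w p]] [] //= [sz] /andP[exw pw] l.
by exists w => //; exists p.
Qed.

Lemma cn_same (T : finType) (e : rel T) (s : T -> bool) :
  (forall x y, e x y -> s x != s y) ->
  (forall x y, exists2 n, n <= 3 & walk_len e n x y) ->
  forall x y, x != y -> s x = s y -> exists w, e x w /\ e w y.
Proof.
move=> hbip hd x y xy sxy; have [n] := hd x y.
case: n => [|[|[|[|n]]]] // _.
- by move/walk0 => exy; rewrite exy eqxx in xy.
- case/walkS => w exw /walk0 wy; subst w.
  by move: (hbip _ _ exw); rewrite sxy eqxx.
- case/walkS => w exw /walkS [w2 ew /walk0 <-]; by exists w.
- case/walkS => w1 e1 /walkS [w2 e2 /walkS [w3 e3 /walk0 w3y]]; subst w3.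
  move: (hbip _ _ e1) (hbip _ _ e2) (hbip _ _ e3) sxy.
  by case: (s x); case: (s w1); case: (s w2); case: (s y).
Qed.

Definition cnb (T : finType) (e : rel T) (B : {set T}) := [exists c, [forall b in B, e b c]].

Lemma cnbP (T : finType) (e : rel T) (B : {set T}) :
  reflect (exists c, common_neighbour e B c) (cnb e B).
Proof.
apply: (iffP existsP) => [[c /forall_inP h]|[c h]]; exists c.
  by move=> a; apply: h.
by apply/forall_inP => a; apply: h.
Qed.

Lemma closed_path (T : finType) (e : rel T) (C : {set T}) :
  (forall x y, x \in C -> e x y -> y \in C) ->
  forall p x, x \in C -> path e x p -> last x p \in C.
Proof.
move=> hC; elim=> [|y p IH] x xC //= /andP[exy py].
by apply: IH => //; apply: hC exy.
Qed.

Lemma partii (T : finType) (e : rel T) (s : T -> bool) :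
  symmetric e -> connected_graph e -> CHH e ->
  (forall x y, e x y -> s x != s y) ->
  (forall x y, exists2 n, n <= 3 & walk_len e n x y) ->
  forall A : {set T}, {in A, forall a, s a} -> #|A| <= maxdeg e ->
  exists v, common_neighbour e A v.
Proof.
move=> esym [hT hconn] hchh hbip hdiam A hsA hAd.
have hcn := cn_same hbip hdiam.
apply/cnbP; case hno: (cnb e A) => //; exfalso.
pose P := fun B : {set T} => (B \subset A) && ~~ cnb e B.
have PA : P A by rewrite /P subxx hno.
case: (arg_minnP (fun B : {set T} => #|B|) PA) => A0 /andP[A0A hA0] hmin.
have hprop : forall B : {set T}, B \proper A0 -> exists c, common_neighbour e B c.
  move=> B hBp; apply/cnbP; case hB: (cnb e B) => //; exfalso.
  have := hmin B; rewrite /P (subset_trans (proper_sub hBp) A0A) hB => /(_ isT).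
  by rewrite leqNgt (proper_card hBp).
have hnoc : ~ exists c, common_neighbour e A0 c by move/cnbP; apply/negP.
have hsA0 : {in A0, forall a, s a} by move=> a /(subsetP A0A); apply: hsA.
have hA0d : #|A0| <= maxdeg e by apply: leq_trans hAd; apply: subset_leq_card.
have hedge : 0 < maxdeg e -> exists x y, e x y.
  move=> h0; case: (boolP [exists x, [exists y, e x y]]) => [/existsP[x /existsP[y exy]]|hne].
    by exists x, y.
  suff : maxdeg e <= 0 by rewrite leqNgt h0.
  apply/bigmax_leqP => x _; rewrite leqn0 cards_eq0; apply/eqP/setP => y.
  rewrite !inE; apply/negP => exy; move: hne; rewrite negb_exists => /forallP /(_ x).
  by rewrite negb_exists => /forallP /(_ y); rewrite exy.
have hA03 : 2 < #|A0|.
  rewrite ltnNge; apply/negP => h2; apply: hnoc.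
  have : #|A0| = 0 \/ #|A0| = 1 \/ #|A0| = 2 by lia.
  case=> [/eqP|[/eqP|/eqP]].
  - rewrite cards_eq0 => /eqP ->; case/card_gt0P: hT => x _.
    by exists x => a; rewrite inE.
  - move=> h1; have md : 0 < maxdeg e by move/eqP: (h1) => h1'; lia.
    move: h1; case/cards1P => a ->.
    have [x [y exy]] := hedge md.
    have [b ab] : exists b, a != b.
      case: (eqVneq a x) => [ax|]; last by exists x.
      by exists y; rewrite ax; apply/eqP => xy; move: (hbip _ _ exy); rewrite xy eqxx.
    have [n _] := hdiam a b; case: n => [/walk0 abe|n /walkS[w aw _]].
      by rewrite abe eqxx in ab.
    by exists w => a'; rewrite inE => /eqP ->.
  - case/cards2P => a [b [ab A0e]].
    have aA : a \in A0 by rewrite A0e !inE eqxx.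
    have bA : b \in A0 by rewrite A0e !inE eqxx orbT.
    rewrite A0e.
    have [w [aw wb]] := hcn a b ab (etrans (hsA0 a aA) (Logic.eq_sym (hsA0 b bA))).
    by exists w => a'; rewrite !inE => /orP[/eqP->|/eqP->] //; rewrite esym.
pose v := fun x => odflt x [pick c | [forall b in A0 :\ x, e b c]].
have hvp : forall a b, a \in A0 -> b \in A0 -> b != a -> e b (v a).
  move=> a b aA bA ba; rewrite /v; case: pickP => [c /forall_inP hc|hn].
    by apply: hc; rewrite !inE ba bA.
  have [c hc] := hprop _ (properD1 aA).
  have := hn c; rewrite (_ : [forall b0 in A0 :\ a, e b0 c] = true) //.
  by apply/forall_inP => b0 b0A; apply: hc.
have hv : {in A0 &, forall a b, e b (v a) = (b != a)}.
  move=> a b aA bA; case: (eqVneq b a) => [->|ba]; last by rewrite hvp.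
  apply/negP => eav; apply: hnoc; exists (v a) => b' b'A.
  by case: (eqVneq b' a) => [->//|b'a]; apply: hvp.
have core1 := core esym hchh hbip hcn hsA0 hA03 hv hnoc hprop.
have vinj : {in A0 &, injective v}.
  move=> a b aA bA vab; apply/eqP; apply/negPn/negP => ab.
  by have := hv b a bA aA; rewrite -vab hv // eqxx (negbTE ab).
pose A1 := [set v x | x in A0].
pose w := fun x => odflt x [pick a in A0 | v a == x].
have wv : forall a, a \in A0 -> w (v a) = a.
  move=> a aA; rewrite /w; case: pickP => [a' /andP[a'A /eqP va]|hn].
    by apply: vinj.
  by have := hn a; rewrite aA eqxx.
pose s' := fun x => ~~ s x.
have hbip' : forall x y, e x y -> s' x != s' y.
  by move=> x y /hbip; rewrite /s'; case: (s x); case: (s y).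
have hcn' : forall x y, x != y -> s' x = s' y -> exists w, e x w /\ e w y.
  by move=> x y xy h; apply: hcn xy _; apply: negb_inj.
have hsA1 : {in A1, forall p, s' p}.
  move=> p /imsetP[a aA ->]; rewrite /s'.
  have [b bA /andP[ba _]] := third a a hA03.
  have := hbip _ _ (etrans (hv a b aA bA) ba).
  by rewrite hsA0 //; case: (s (v a)).
have hA13 : 2 < #|A1| by rewrite card_in_imset.
have hv1 : {in A1 &, forall p q, e q (w p) = (q != p)}.
  move=> p q /imsetP[a aA ->] /imsetP[b bA ->].
  by rewrite wv // esym hv // (inj_in_eq vinj) // eq_sym.
have hnoc1 : ~ exists c, common_neighbour e A1 c.
  move=> [c hc]; have [m mA] : exists m, m \in A0 by apply/card_gt0P; lia.
  have := hc (v m) (imset_f _ mA); rewrite esym => /(core1 _ _ mA) cA.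
  by have := hc (v c) (imset_f _ cA); rewrite esym hv // eqxx.
have hprop1 : forall B : {set T}, B \proper A1 -> exists c, common_neighbour e B c.
  move=> B /properP [BA1 [q qA1 qB]]; exists (w q) => p pB.
  have pA1 := subsetP BA1 _ pB; rewrite hv1 //.
  by apply/eqP => pq; move: qB; rewrite -pq pB.
have core2 := core esym hchh hbip' hcn' hsA1 hA13 hv1 hnoc1 hprop1.
have nbA0 : forall a z, a \in A0 -> e z a -> z \in A1.
  by move=> a z aA; have := core2 (v a) z (imset_f v aA); rewrite wv.
pose C := A0 :|: A1.
have closedC : forall x y, x \in C -> e x y -> y \in C.
  move=> x y; rewrite !inE => /orP[xA|/imsetP[m mA ->]] exy.
    by rewrite (nbA0 x y xA) ?orbT // esym.
  by rewrite (core1 m y mA) // esym.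
have [a0 a0A] : exists a, a \in A0 by apply/card_gt0P; lia.
have allC : forall x, x \in C.
  move=> x; case/connectP: (hconn a0 x) => p pth ->.
  by apply: (closed_path closedC) => //; rewrite inE a0A.
have hdeg : forall x, degree e x <= #|A0|.-1.
  move=> x; have := allC x; rewrite inE => /orP[xA|/imsetP[m mA xe]]; last subst x.
    have vxA1 : v x \in A1 by apply: imset_f.
    have := cardsD1 (v x) A1; rewrite vxA1 card_in_imset // => hc.
    have -> : #|A0|.-1 = #|A1 :\ v x| by lia.
    apply: subset_leq_card; apply/subsetP => y; rewrite !inE => exy.
    rewrite (nbA0 x y xA) ?andbT; last by rewrite esym.
    by apply/eqP => yv; move: exy; rewrite yv hv // eqxx.
  have := cardsD1 m A0; rewrite mA => hc.
  have -> : #|A0|.-1 = #|A0 :\ m| by lia.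
  apply: subset_leq_card; apply/subsetP => y; rewrite !inE => exy.
  have yA : y \in A0 by apply: (core1 m y mA); rewrite esym.
  by rewrite yA andbT; apply/eqP => ym; move: exy; rewrite ym esym hv // eqxx.
have : maxdeg e <= #|A0|.-1 by apply/bigmax_leqP => x _; apply: hdeg.
lia.
Qed.

Lemma shortcut (T : finType) (e : rel T) :
  symmetric e -> irreflexive e -> CHH e -> forall c0 c1 c2 c3 c4 m : T,
  uniq [:: c0; c1; c2; c3; c4] ->
  e c0 c1 -> e c1 c2 -> e c2 c3 -> e c3 c4 ->
  e c0 c2 = false -> e c0 c3 = false -> e c0 c4 = false ->
  e c1 c3 = false -> e c1 c4 = false -> e c2 c4 = false ->
  e c0 m -> e m c4 ->
  forall q0 q1 q2 q3 q4, e q0 q1 -> e q1 q2 -> e q2 q3 -> e q3 q4 ->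
  exists z, e q0 z /\ e z q4.
Proof.
move=> esym irr hchh c0 c1 c2 c3 c4 m.
rewrite /= !inE !negb_or => /and5P[/and4P[n01 n02 n03 n04] /and3P[n12 n13 n14] /andP[n23 n24] n34 _].
move=> e01 e12 e23 e34 f02 f03 f04 f13 f14 f24 e0m em4 q0 q1 q2 q3 q4 h01 h12 h23 h34.
pose S := [set c0; c1; c2; c3; c4].
pose f := fun x => if x == c0 then q0 else if x == c1 then q1 else if x == c2 then q2
                   else if x == c3 then q3 else q4.
have fc0 : f c0 = q0 by rewrite /f eqxx.
have fc1 : f c1 = q1 by rewrite /f eq_sym (negbTE n01) eqxx.
have fc2 : f c2 = q2 by rewrite /f eq_sym (negbTE n02) eq_sym (negbTE n12) eqxx.
have fc3 : f c3 = q3 by rewrite /f eq_sym (negbTE n03) eq_sym (negbTE n13) eq_sym (negbTE n23) eqxx.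
have fc4 : f c4 = q4 by rewrite /f eq_sym (negbTE n04) eq_sym (negbTE n14) eq_sym (negbTE n24) eq_sym (negbTE n34).
have memS : forall x, x \in S -> x = c0 \/ x = c1 \/ x = c2 \/ x = c3 \/ x = c4.
  move=> x; rewrite !inE.
  by case/orP=> [/orP[/orP[/orP[/eqP->|/eqP->]|/eqP->]|/eqP->]|/eqP->];
     tauto.
have hom : hom_from_induced e S f.
  move=> x y /memS hx /memS hy.
  case: hx => [->|[->|[->|[->|->]]]]; case: hy => [->|[->|[->|[->|->]]]]; rewrite ?fc0 ?fc1 ?fc2 ?fc3 ?fc4 ?irr //;
  rewrite ?[e c1 c0]esym ?[e c2 c0]esym ?[e c3 c0]esym ?[e c4 c0]esym
          ?[e c2 c1]esym ?[e c3 c1]esym ?[e c4 c1]esym ?[e c3 c2]esym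
          ?[e c4 c2]esym ?[e c4 c3]esym ?f02 ?f03 ?f04 ?f13 ?f14 ?f24 //;
  by move=> _; rewrite esym.
pose R := induced_rel e S.
have Rsym : symmetric R by move=> a b; rewrite /R /induced_rel andbCA esym.
have S0 : c0 \in S by rewrite !inE eqxx.
have S1 : c1 \in S by rewrite !inE eqxx !orbT.
have S2 : c2 \in S by rewrite !inE eqxx !orbT.
have S3 : c3 \in S by rewrite !inE eqxx !orbT.
have S4 : c4 \in S by rewrite !inE eqxx !orbT.
have C1 : connect R c0 c1 by apply: connect1; rewrite /R /induced_rel S0 S1.
have C2 : connect R c0 c2.
  by apply: (connect_trans C1); apply: connect1; rewrite /R /induced_rel S1 S2.
have C3 : connect R c0 c3.
  by apply: (connect_trans C2); apply: connect1; rewrite /R /induced_rel S2 S3.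
have C4 : connect R c0 c4.
  by apply: (connect_trans C3); apply: connect1; rewrite /R /induced_rel S3 S4.
have toC : forall x, x \in S -> connect R c0 x.
  move=> x /memS; case=> [xe|[xe|[xe|[xe|xe]]]]; rewrite xe //; apply: connect0.
have hconn : induced_connected e S.
  split; first by apply/set0Pn; exists c0.
  move=> x y xS yS; apply: (connect_trans (y:=c0)); last exact: toC.
  by rewrite (sym_connect_sym Rsym); apply: toC.
have [g [gendo gf]] := hchh S f hconn hom.
exists (g m); split.
  by have := gendo _ _ e0m; rewrite gf // fc0.
by have := gendo _ _ em4; rewrite (gf c4) // fc4.
Qed.

Lemma walk_shorten (T : finType) (e : rel T) :
  (forall q0 q1 q2 q3 q4, e q0 q1 -> e q1 q2 -> e q2 q3 -> e q3 q4 ->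
     exists z, e q0 z /\ e z q4) ->
  forall n x y, walk_len e n x y -> exists2 n', n' <= 3 & walk_len e n' x y.
Proof.
move=> hsc n; elim: n {-2}n (leqnn n) => [|N IH] n hn x y hw.
  by exists n => //; lia.
case: (leqP n 3) => [h3|h3]; first by exists n.
case: hw => p [sp pth lp].
case: p sp pth lp => [|q1 [|q2 [|q3 [|q4 r]]]] /= sp; try by rewrite -sp in h3.
move=> /and5P[e1 e2 e3 e4 pr] lp.
have [z [exz ez4]] := hsc x q1 q2 q3 q4 e1 e2 e3 e4.
apply: (IH (size r).+2); first by lia.
by exists [:: z, q4 & r]; rewrite /= exz ez4 pr.
Qed.

Lemma dist3 (T : finType) (e : rel T) (s : T -> bool) :
  (forall x y, e x y -> s x != s y) -> forall c0 c1 c2 c3 : T,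
  c0 != c3 -> e c0 c1 -> e c1 c2 -> e c2 c3 -> e c0 c3 = false -> dist_eq e c0 c3 3.
Proof.
move=> hbip c0 c1 c2 c3 n03 e01 e12 e23 f03; split.
  by exists [:: c1; c2; c3]; rewrite /= e01 e12 e23.
case=> [|[|[|n]]] // _.
- by move/walk0 => h; rewrite h eqxx in n03.
- by case/walkS => w ew /walk0 wc; subst w; rewrite ew in f03.
- case/walkS => w ew /walkS [w2 ew2 /walk0 wc]; subst w2.
  move: (hbip _ _ e01) (hbip _ _ e12) (hbip _ _ e23) (hbip _ _ ew) (hbip _ _ ew2).
  by case: (s c0); case: (s c1); case: (s c2); case: (s c3); case: (s w).
Qed.

Definition shortcut_prop (T : finType) (e : rel T) :=
  forall q0 q1 q2 q3 q4, e q0 q1 -> e q1 q2 -> e q2 q3 -> e q3 q4 ->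
     exists z, e q0 z /\ e z q4.

Definition far_pair (T : finType) (e : rel T) :=
  exists c0 c1 c2 c3, [/\ c0 != c3, e c0 c1, e c1 c2, e c2 c3 & e c0 c3 = false].

Lemma embed_C6 (T : finType) (e : rel T) :
  symmetric e -> irreflexive e -> CHH e -> embeds e C6_rel ->
  shortcut_prop e /\ far_pair e.
Proof.
move=> esym irr hchh [f [finj hf]].
pose o0 := @Ordinal 6 0 isT. pose o1 := @Ordinal 6 1 isT. pose o2 := @Ordinal 6 2 isT.
pose o3 := @Ordinal 6 3 isT. pose o4 := @Ordinal 6 4 isT. pose o5 := @Ordinal 6 5 isT.
split.
  move=> q0 q1 q2 q3 q4.
  apply: (shortcut esym irr hchh (c0 := f o1) (c1 := f o2) (c2 := f o3) (c3 := f o4) (c4 := f o5) (m := f o0));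
    rewrite ?hf //.
  by rewrite (map_inj_uniq finj [:: o1; o2; o3; o4; o5]).
exists (f o0), (f o1), (f o2), (f o3); rewrite !hf; split => //.
by rewrite (inj_eq finj).
Qed.

Lemma embed_TS (T : finType) (e : rel T) :
  symmetric e -> irreflexive e -> CHH e -> embeds e two_squares_rel ->
  shortcut_prop e /\ far_pair e.
Proof.
move=> esym irr hchh [f [finj hf]].
pose o0 := @Ordinal 6 0 isT. pose o1 := @Ordinal 6 1 isT. pose o2 := @Ordinal 6 2 isT.
pose o3 := @Ordinal 6 3 isT. pose o4 := @Ordinal 6 4 isT. pose o5 := @Ordinal 6 5 isT.
split.
  move=> q0 q1 q2 q3 q4.
  apply: (shortcut esym irr hchh (c0 := f o0) (c1 := f o1) (c2 := f o2) (c3 := f o3) (c4 := f o4) (m := f o5));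
    rewrite ?hf //.
  by rewrite (map_inj_uniq finj [:: o0; o1; o2; o3; o4]).
exists (f o0), (f o1), (f o2), (f o3); rewrite !hf; split => //.
by rewrite (inj_eq finj).
Qed.

Theorem lemma5p9 (T : finType) (e : rel T) (X Y : {set T}) :
  simple_graph e -> connected_graph e -> bipartition e X Y -> CHH e ->
  ((embeds e C6_rel \/ embeds e two_squares_rel) -> diam_eq e 3) /\
  (diam_eq e 3 -> forall k, k <= maxdeg e ->
     (forall A : {set T}, A \subset X -> #|A| = k -> exists v, common_neighbour e A v) /\
     (forall A : {set T}, A \subset Y -> #|A| = k -> exists v, common_neighbour e A v)).
Proof.
move=> [esym irr] hconn [hXY hXuY hb] hchh.
have inY : forall x, (x \in Y) = (x \notin X).
  move=> x; case xX: (x \in X) => /=.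
    apply/negP => xY; have : x \in X :&: Y by rewrite inE xX xY.
    by rewrite hXY inE.
  have : x \in X :|: Y by rewrite hXuY inE.
  by rewrite inE xX.
have hbX : forall x y, e x y -> (x \in X) != (y \in X).
  by move=> x y /hb; rewrite inY => ->; case: (y \in X).
have hbY : forall x y, e x y -> (x \in Y) != (y \in Y).
  by move=> x y /hbX; rewrite !inY; case: (x \in X); case: (y \in X).
split.
  move=> hemb.
  have [hsc [c0 [c1 [c2 [c3 [n03 e01 e12 e23 f03]]]]]] : shortcut_prop e /\ far_pair e.
    by case: hemb => h; [apply: embed_C6 | apply: embed_TS].
  split; last by exists c0, c3; exact: (dist3 hbX n03 e01 e12 e23 f03).
  move=> x y; case/connectP: (hconn.2 x y) => p pth lp.
  by apply: (walk_shorten hsc (n := size p)); exists p.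
move=> [hdiam _] k hk; split=> A hA hAk.
  apply: (partii esym hconn hchh hbX) => //; last by rewrite hAk.
  by move=> a /(subsetP hA).
apply: (partii esym hconn hchh hbY) => //; last by rewrite hAk.
by move=> a /(subsetP hA).
Qed.
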